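(* Let $f:\mathfrak g\to\mathfrak g$ be Ad-covariant ($f(gXg^{-1})=gf(X)g^{-1}$). Let $T(t)\in\mathbf T_{m+1}$ be a smooth curve with $1-\alpha b_k\neq0$, put $\mathcal F_-=I+\alpha\mathcal E$, $\mathcal L=\mathcal F_--\alpha T$, $\mathcal T_1=\mathcal L\mathcal F_-^{-1}$, $\mathcal T_2=\mathcal F_-^{-1}\mathcal L$, $\mathcal A_1=\mathcal F_-\,\pi_-\big(\mathcal F_-^{-1}f(\mathcal T_1)\big)$, $\mathcal A_2=\pi_-\big(f(\mathcal T_2)\mathcal F_-^{-1}\big)\mathcal F_-$, and suppose $\dot{\mathcal T}_1=[\mathcal A_1,\mathcal T_1]$. Write $P_0(\mathcal A_1)=\mathrm{diag}(\mathbf a_1,\dots,\mathbf a_N)$, $P_0(\mathcal A_2)=\mathrm{diag}(\mathbf a'_1,\dots,\mathbf a'_N)$. Then $\mathbf a'_k=\mathbf a_{k+1}$ and there is $C$ independent of $k$ such that $\mathbf a_k=C+\sum_{j=1}^{k-1}\frac{\alpha\dot b_j}{1-\alpha b_j}$, $\mathbf a'_k=C+\sum_{j=1}^{k}\frac{\alpha\dot b_j}{1-\alpha b_j}$.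
   Context: Periodic lattice setting: $N\ge2$, $m\ge1$; $\mathfrak g=\{X(\lambda)\in gl(N)[\lambda,\lambda^{-1}]:\Omega X(\lambda)\Omega^{-1}=X(\omega\lambda)\}$, $\omega=e^{2\pi i/N}$, $\Omega=\mathrm{diag}(1,\omega,\dots,\omega^{N-1})$, matrix indices and subscripts modulo $N$; $\mathfrak g_p=\{\lambda^p\sum_{j-k\equiv p}x_{jk}E_{jk}\}$, $P_0$ projection onto $\mathfrak g_0$, $\pi_-$ projection onto $\oplus_{p<0}\mathfrak g_p$, $\pi_+$ onto $\oplus_{p\ge0}\mathfrak g_p$. $\alpha\ne0$ real; $\mathcal E=\lambda\sum_kE_{k+1,k}$; $\mathcal F_-^{-1}$ a formal power series in $\lambda$ (algebra tacitly completed). $\mathbf T_{m+1}$ = set of $T=\mathcal E+\sum_kb_kE_{kk}+\sum_{j=1}^m\lambda^{-j}\sum_ka_k^{(j)}E_{k,k+j}$. *)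

(* Defs.v *)
From mathcomp Require Import all_boot all_order all_algebra.
From mathcomp Require Import complex.
From mathcomp Require Import all_classical all_reals all_analysis.
Set Implicit Arguments. Unset Strict Implicit. Unset Printing Implicit Defensive.
Import Order.TTheory GRing.Theory Num.Theory.
Local Open Scope ring_scope.

Definition reC (R : realType) (z : R[i]) : R := let: Complex x _ := z in x.
Definition imC (R : realType) (z : R[i]) : R := let: Complex _ y := z in y.

Definition smoothR (R : realType) (g : R -> R) : Prop :=
  forall (n : nat) (t : R), derivable (iter n (fun h => derive1 h) g) t 1.

Definition smoothC (R : realType) (u : R -> R[i]) : Prop :=
  smoothR (fun s => reC (u s)) /\ smoothR (fun s => imC (u s)).

Definition cderiv (R : realType) (u : R -> R[i]) (t : R) : R[i] :=
  Complex (derive1 (fun s => reC (u s)) t) (derive1 (fun s => imC (u s)) t).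

(* Formal Laurent series in lambda with N x N complex matrix coefficients:  *)
(* X p = coefficient of lambda^p.                                            *)
Definition loop (R : realType) (N : nat) := int -> 'M[R[i]]_N.

(* twisting condition Omega X(lambda) Omega^-1 = X(omega lambda):           *)
Definition twisted (R : realType) (N : nat) (X : loop R N) : Prop :=
  forall (p : int) (i j : 'I_N), X p i j != 0 ->
    (N%:Z %| (i%:Z - j%:Z - p))%Z.

Definition bounded_below (R : realType) (N : nat) (X : loop R N) : Prop :=
  exists b : int, forall p : int, (p < b)%R -> X p = 0.

(* the completed algebra \hat g (formal power series in lambda allowed) *)
Definition inG (R : realType) (N : nat) (X : loop R N) : Prop :=
  twisted X /\ bounded_below X.

Definition lo (R : realType) (N : nat) (X : loop R N) : int :=
  xget 0%R [set b : int | forall p : int, (p < b)%R -> X p = 0].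

(* Cauchy product (correct whenever X and Y are bounded below) *)
Definition mulL (R : realType) (N : nat) (X Y : loop R N) : loop R N :=
  fun p => if (lo X + lo Y <= p)%R then
      \sum_(i < absz (p - lo X - lo Y + 1))
         (X (lo X + i%:Z) *m Y (p - lo X - i%:Z))
    else 0.

Definition addL (R : realType) (N : nat) (X Y : loop R N) : loop R N :=
  fun p => X p + Y p.
Definition subL (R : realType) (N : nat) (X Y : loop R N) : loop R N :=
  fun p => X p - Y p.
Definition scaleL (R : realType) (N : nat) (c : R[i]) (X : loop R N) : loop R N :=
  fun p => c *: X p.
Definition oneL (R : realType) (N : nat) : loop R N :=
  fun p => if p == 0 then 1%:M else 0.
Definition commL (R : realType) (N : nat) (X Y : loop R N) : loop R N :=
  subL (mulL X Y) (mulL Y X).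

Definition pim (R : realType) (N : nat) (X : loop R N) : loop R N :=
  fun p => if (p < 0)%R then X p else 0.

(* P_0 : degree-zero part (a diagonal matrix for twisted X) *)
Definition P0 (R : realType) (N : nat) (X : loop R N) : 'M[R[i]]_N := X 0.

Definition shiftM (R : realType) (N : nat) : 'M[R[i]]_N :=
  \matrix_(i < N, j < N) (if (i : nat) == (j.+1 %% N)%N then 1 else 0).

Definition calE (R : realType) (N : nat) : loop R N :=
  fun p => if p == 1 then shiftM R N else 0.

Definition Fminus (R : realType) (N : nat) (alpha : R) : loop R N :=
  addL (oneL R N) (scaleL (alpha%:C)%C (calE R N)).

(* T = calE + sum_k b_k E_kk + sum_{j=1}^m lambda^-j sum_k a^(j)_k E_{k,k+j}, *)
(* at time t; a j k t stands for a^(j)_k(t) (only 1 <= j <= m is used).     *)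
Definition Tcurve (R : realType) (N m : nat) (b : 'I_N -> R -> R[i])
    (a : nat -> 'I_N -> R -> R[i]) (t : R) : loop R N :=
  fun p =>
    if p == 1 then shiftM R N
    else if p == 0 then \matrix_(i < N, j < N) (if i == j then b i t else 0)
    else if ((- (m%:Z) <= p)%R && (p < 0)%R) then
      \matrix_(i < N, j < N)
        (if (j : nat) == ((i + absz p) %% N)%N then a (absz p) i t else 0)
    else 0.

Definition dotL (R : realType) (N : nat) (X : R -> loop R N) (t : R) : loop R N :=
  fun p => \matrix_(i < N, j < N) cderiv (fun s => X s p i j) t.

(* Main.v *)
Require Import Defs.
From mathcomp Require Import all_boot all_order all_algebra.
From mathcomp Require Import complex.
From mathcomp Require Import all_classical all_reals all_analysis.
From mathcomp Require Import zify ring lra.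
Import Order.TTheory GRing.Theory Num.Theory.
Set Implicit Arguments. Unset Strict Implicit.
Local Open Scope ring_scope.

Lemma ext_win (V : zmodType) (g : int -> V) (lo : int) (M d e : nat) :
  (forall s, (s < lo) || (lo + M%:Z <= s) -> g s = 0) ->
  \sum_(i < d + M + e) g (lo - d%:Z + i%:Z) = \sum_(i < M) g (lo + i%:Z).
Proof.
move=> H; rewrite big_split_ord big_split_ord /=.
rewrite big1; last first.
  move=> i _; apply: H; apply/orP; left => /=. have := ltn_ord i. lia.
rewrite add0r [X in _ + X]big1; last first.
  move=> i _; apply: H; apply/orP; right => /=. lia.
rewrite addr0; apply: eq_bigr => i _ /=; congr g. lia.
Qed.

Lemma win_eq (V : zmodType) (g : int -> V) (lo1 lo2 : int) (M1 M2 : nat) :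
  (forall s, (s < lo1) || (lo1 + M1%:Z <= s) -> g s = 0) ->
  (forall s, (s < lo2) || (lo2 + M2%:Z <= s) -> g s = 0) ->
  \sum_(i < M1) g (lo1 + i%:Z) = \sum_(i < M2) g (lo2 + i%:Z).
Proof.
move=> H1 H2.
pose L : int := Num.min lo1 lo2. pose U : int := Num.max (lo1 + M1%:Z) (lo2 + M2%:Z).
have hL1 : L <= lo1 by rewrite ge_min lexx.
have hL2 : L <= lo2 by rewrite ge_min lexx orbT.
have hU1 : lo1 + M1%:Z <= U by rewrite le_max lexx.
have hU2 : lo2 + M2%:Z <= U by rewrite le_max lexx orbT.
clearbody L U; move: L U hL1 hL2 hU1 hU2 => L U hL1 hL2 hU1 hU2.
rewrite -(@ext_win V g lo1 M1 (absz (lo1 - L)%R) (absz (U - lo1 - M1%:Z)%R) H1).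
rewrite -(@ext_win V g lo2 M2 (absz (lo2 - L)%R) (absz (U - lo2 - M2%:Z)%R) H2).
have e1 : (absz (lo1 - L)%R + M1 + absz (U - lo1 - M1%:Z)%R)%N = absz (U - L)%R by lia.
have e2 : (absz (lo2 - L)%R + M2 + absz (U - lo2 - M2%:Z)%R)%N = absz (U - L)%R by lia.
rewrite e1 e2; apply: eq_bigr => i _; congr g; lia.
Qed.

Lemma lo_spec (R : realType) (N : nat) (X : loop R N) :
  bounded_below X -> forall p, p < lo X -> X p = 0.
Proof.
move=> hb; rewrite /lo.
have := @xgetPex _ 0 [set b : int | forall p : int, (p < b)%R -> X p = 0] hb.
by [].
Qed.

Lemma mulL_win (R : realType) (N : nat) (X Y : loop R N) (r lo0 : int) (M : nat) :
  bounded_below X -> bounded_below Y ->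
  (forall s, (s < lo0) || (lo0 + M%:Z <= s) -> X s *m Y (r - s) = 0) ->
  mulL X Y r = \sum_(i < M) X (lo0 + i%:Z) *m Y (r - (lo0 + i%:Z)).
Proof.
move=> bX bY H.
have hX := lo_spec bX; have hY := lo_spec bY.
rewrite /mulL; case: ifP => h.
  rewrite (eq_bigr (fun i : 'I__ => (fun s => X s *m Y (r - s)) (lo X + i%:Z))); last first.
    by move=> i _ /=; congr (_ *m Y _); lia.
  apply: (win_eq (g := fun s => X s *m Y (r - s))) => //.
  move=> s /orP[hs|hs]; first by rewrite hX // mul0mx.
  rewrite hY ?mulmx0 //; lia.
rewrite big1 // => i _.
have [hs|hs] := ltP (lo0 + i%:Z) (lo X); first by rewrite hX // mul0mx.
rewrite hY ?mulmx0 //; lia.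
Qed.

Lemma bb_mulL (R : realType) (N : nat) (X Y : loop R N) :
  bounded_below X -> bounded_below Y -> bounded_below (mulL X Y).
Proof.
move=> _ _; exists (lo X + lo Y) => p hp; rewrite /mulL.
by case: ifP => // h; move: h hp; rewrite leNgt => /negP.
Qed.

Lemma mulL0 (R : realType) (N : nat) (X Y : loop R N) p :
  p < lo X + lo Y -> mulL X Y p = 0.
Proof. by rewrite /mulL; case: ifP => // h; move: h; rewrite leNgt => /negP. Qed.

Lemma mulLA (R : realType) (N : nat) (X Y Z : loop R N) :
  bounded_below X -> bounded_below Y -> bounded_below Z ->
  mulL (mulL X Y) Z = mulL X (mulL Y Z).
Proof.
move=> bX bY bZ; apply/funext => p.
have hX := lo_spec bX; have hY := lo_spec bY; have hZ := lo_spec bZ.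
set bx := lo X; set by_ := lo Y; set bz := lo Z.
set M := (absz (p - bx - by_ - bz)%R + 1)%N.
have hM : p - bx - by_ - bz < M%:Z by rewrite /M; lia.
rewrite (@mulL_win _ _ _ _ p (bx + by_) M (bb_mulL bX bY) bZ); last first.
  move=> s /orP[hs|hs]; first by rewrite mulL0 // mul0mx.
  rewrite hZ ?mulmx0 //; lia.
rewrite (@mulL_win _ _ _ _ p bx M bX (bb_mulL bY bZ)); last first.
  move=> s /orP[hs|hs]; first by rewrite hX // mul0mx.
  rewrite mulL0 ?mulmx0 //; lia.
under eq_bigr => i _.
  rewrite (@mulL_win _ _ X Y _ bx M bX bY); last first.
    move=> s /orP[hs|hs]; first by rewrite hX // mul0mx.
    rewrite hY ?mulmx0 //; have := ltn_ord i; lia.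
  rewrite mulmx_suml.
over.
under [RHS]eq_bigr => j _.
  rewrite (@mulL_win _ _ Y Z _ by_ M bY bZ); last first.
    move=> s /orP[hs|hs]; first by rewrite hY // mul0mx.
    rewrite hZ ?mulmx0 //; have := ltn_ord j; lia.
  rewrite mulmx_sumr.
over.
rewrite exchange_big /=; apply: eq_bigr => j _.
have hj := ltn_ord j.
pose g := fun s => X (bx + j%:Z) *m Y s *m Z (p - bx - j%:Z - s).
transitivity (\sum_(i < M) g ((by_ - j%:Z) + i%:Z)).
  apply: eq_bigr => i _; rewrite /g; congr (_ *m Y _ *m Z _); lia.
transitivity (\sum_(i < M) g (by_ + i%:Z)); last first.
  apply: eq_bigr => i _; rewrite /g mulmxA; congr (_ *m Y _ *m Z _); lia.
apply: win_eq.
  move=> s /orP[hs|hs]; rewrite /g.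
    by rewrite hY ?mulmx0 ?mul0mx //; lia.
  by rewrite hZ ?mulmx0 //; lia.
move=> s /orP[hs|hs]; rewrite /g.
  by rewrite hY ?mulmx0 ?mul0mx //; lia.
by rewrite hZ ?mulmx0 //; lia.
Qed.

Lemma bb_oneL (R : realType) (N : nat) : bounded_below (oneL R N).
Proof. by exists 0 => p hp; rewrite /oneL; case: eqP => // e; move: hp; rewrite e. Qed.

Lemma oneL_neq (R : realType) (N : nat) p : p != 0 -> oneL R N p = 0.
Proof. by rewrite /oneL => /negbTE ->. Qed.

Lemma mulL1 (R : realType) (N : nat) (X : loop R N) :
  bounded_below X -> mulL X (oneL R N) = X.
Proof.
move=> bX; apply/funext => p.
rewrite (@mulL_win _ _ _ _ p p 1 bX (@bb_oneL R N)); last first.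
  move=> s hs; rewrite oneL_neq ?mulmx0 //; apply/eqP; lia.
rewrite big_ord1 /= /oneL addr0 subrr eqxx mulmx1; congr X; lia.
Qed.

Lemma mul1L (R : realType) (N : nat) (X : loop R N) :
  bounded_below X -> mulL (oneL R N) X = X.
Proof.
move=> bX; apply/funext => p.
rewrite (@mulL_win _ _ _ _ p 0 1 (@bb_oneL R N) bX); last first.
  move=> s hs; rewrite oneL_neq ?mul0mx //; apply/eqP; lia.
rewrite big_ord1 /= /oneL addr0 eqxx mul1mx; congr X; lia.
Qed.

Lemma bb_subL (R : realType) (N : nat) (X Y : loop R N) :
  bounded_below X -> bounded_below Y -> bounded_below (subL X Y).
Proof.
move=> bX bY; exists (Num.min (lo X) (lo Y)) => p hp; rewrite /subL.
rewrite (lo_spec bX) ?(lo_spec bY) ?subrr //.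
  by apply: (lt_le_trans hp); rewrite ge_min lexx orbT.
by apply: (lt_le_trans hp); rewrite ge_min lexx.
Qed.

Lemma mulLBl (R : realType) (N : nat) (X Y Z : loop R N) :
  bounded_below X -> bounded_below Y -> bounded_below Z ->
  mulL (subL X Y) Z = subL (mulL X Z) (mulL Y Z).
Proof.
move=> bX bY bZ; apply/funext => p.
have hX := lo_spec bX; have hY := lo_spec bY; have hZ := lo_spec bZ.
pose l : int := Num.min (lo X) (lo Y).
have l1 : l <= lo X by rewrite ge_min lexx.
have l2 : l <= lo Y by rewrite ge_min lexx orbT.
clearbody l.
set M := (absz (p - l - lo Z)%R + 1)%N.
have hM : p - l - lo Z < M%:Z by rewrite /M; lia.
rewrite /subL (@mulL_win _ _ X Z p l M bX bZ); last first.
  move=> s /orP[hs|hs]; first by rewrite hX ?mul0mx //; lia.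
  by rewrite hZ ?mulmx0 //; lia.
rewrite (@mulL_win _ _ Y Z p l M bY bZ); last first.
  move=> s /orP[hs|hs]; first by rewrite hY ?mul0mx //; lia.
  by rewrite hZ ?mulmx0 //; lia.
rewrite (@mulL_win _ _ _ Z p l M (bb_subL bX bY) bZ); last first.
  move=> s /orP[hs|hs]; first by rewrite /subL hX ?hY ?subrr ?mul0mx //; lia.
  by rewrite hZ ?mulmx0 //; lia.
rewrite -sumrB; apply: eq_bigr => i _; by rewrite mulmxBl.
Qed.

Lemma mulL2l (R : realType) (N : nat) (W Y : loop R N) p :
  bounded_below Y -> (forall s, s != 0 -> s != 1 -> W s = 0) ->
  mulL W Y p = W 0 *m Y p + W 1 *m Y (p - 1).
Proof.
move=> bY hW.
have bW : bounded_below W.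
  by exists 0 => s hs; apply: hW; apply/eqP; lia.
rewrite (@mulL_win _ _ W Y p 0 2 bW bY); last first.
  move=> s hs; rewrite hW ?mul0mx //; apply/eqP; lia.
rewrite !big_ord_recl big_ord0 addr0 /=.
rewrite !addr0; f_equal; f_equal; try f_equal; rewrite /bump /=; lia.
Qed.

Lemma mulL2r (R : realType) (N : nat) (W Y : loop R N) p :
  bounded_below Y -> (forall s, s != 0 -> s != 1 -> W s = 0) ->
  mulL Y W p = Y p *m W 0 + Y (p - 1) *m W 1.
Proof.
move=> bY hW.
have bW : bounded_below W.
  by exists 0 => s hs; apply: hW; apply/eqP; lia.
rewrite (@mulL_win _ _ Y W p (p - 1) 2 bY bW); last first.
  move=> s hs; rewrite hW ?mulmx0 //; apply/eqP; lia.
rewrite !big_ord_recl big_ord0 /= !addr0 addrC.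
f_equal; f_equal; try f_equal; rewrite /bump /=; lia.
Qed.

Definition Dc (R : realType) (u : R -> R[i]) (t : R) :=
  derivable (fun s => reC (u s)) t 1 /\ derivable (fun s => imC (u s)) t 1.

Lemma reC_add (R : realType) (x y : R[i]) : reC (x + y) = reC x + reC y.
Proof. by case: x; case: y. Qed.
Lemma imC_add (R : realType) (x y : R[i]) : imC (x + y) = imC x + imC y.
Proof. by case: x; case: y. Qed.
Lemma reC_mul (R : realType) (x y : R[i]) : reC (x * y) = reC x * reC y - imC x * imC y.
Proof. by case: x; case: y. Qed.
Lemma imC_mul (R : realType) (x y : R[i]) : imC (x * y) = reC x * imC y + imC x * reC y.
Proof. by case: x => a b; case: y => c d /=. Qed.

Lemma Dc_cst (R : realType) (c : R[i]) t : Dc (fun _ => c) t.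
Proof. by split; apply: derivable_cst. Qed.

Lemma cderiv_cst (R : realType) (c : R[i]) t : cderiv (fun _ => c) t = 0.
Proof. by rewrite /cderiv !derive1E !derive_cst. Qed.

Lemma Dc_add (R : realType) (u v : R -> R[i]) t :
  Dc u t -> Dc v t -> Dc (fun s => u s + v s) t.
Proof.
move=> [u1 u2] [v1 v2]; split.
  have -> : (fun s => reC (u s + v s)) = (fun s => reC (u s)) + (fun s => reC (v s)).
    by apply/funext => s; rewrite reC_add.
  exact: derivableD.
have -> : (fun s => imC (u s + v s)) = (fun s => imC (u s)) + (fun s => imC (v s)).
  by apply/funext => s; rewrite imC_add.
exact: derivableD.
Qed.

Lemma cderiv_add (R : realType) (u v : R -> R[i]) t :
  Dc u t -> Dc v t -> cderiv (fun s => u s + v s) t = cderiv u t + cderiv v t.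
Proof.
move=> [u1 u2] [v1 v2]; rewrite /cderiv.
have -> : (fun s => reC (u s + v s)) = (fun s => reC (u s)) + (fun s => reC (v s)).
  by apply/funext => s; rewrite reC_add.
have -> : (fun s => imC (u s + v s)) = (fun s => imC (u s)) + (fun s => imC (v s)).
  by apply/funext => s; rewrite imC_add.
by rewrite !derive1E !deriveD.
Qed.

Lemma mulc_fun_re (R : realType) (c : R[i]) (u : R -> R[i]) :
  (fun s => reC (c * u s)) =
  (reC c \*: (fun s => reC (u s))) - (imC c \*: (fun s => imC (u s))).
Proof. by apply/funext => s; rewrite reC_mul. Qed.

Lemma mulc_fun_im (R : realType) (c : R[i]) (u : R -> R[i]) :
  (fun s => imC (c * u s)) =
  (reC c \*: (fun s => imC (u s))) + (imC c \*: (fun s => reC (u s))).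
Proof. by apply/funext => s; rewrite imC_mul. Qed.

Lemma Dc_mull (R : realType) (c : R[i]) (u : R -> R[i]) t :
  Dc u t -> Dc (fun s => c * u s) t.
Proof.
move=> [u1 u2]; split; [rewrite mulc_fun_re|rewrite mulc_fun_im].
  by apply: derivableB; apply: derivableZ.
by apply: derivableD; apply: derivableZ.
Qed.

Lemma cderiv_mull (R : realType) (c : R[i]) (u : R -> R[i]) t :
  Dc u t -> cderiv (fun s => c * u s) t = c * cderiv u t.
Proof.
move=> [u1 u2]; rewrite /cderiv mulc_fun_re mulc_fun_im !derive1E.
rewrite deriveB; [|exact: derivableZ|exact: derivableZ].
rewrite deriveD; [|exact: derivableZ|exact: derivableZ].
rewrite !deriveZ //.
move: ('D_1 (fun s => reC (u s)) t) ('D_1 (fun s => imC (u s)) t) => x y.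
case: c => c1 c2.
have -> : ((c1 +i* c2) * (x +i* y) = (c1 * x - c2 * y) +i* (c1 * y + c2 * x))%C by [].
by congr Complex.
Qed.


Lemma Dc_sum (R : realType) n (u : 'I_n -> R -> R[i]) t :
  (forall i, Dc (u i) t) -> Dc (fun s => \sum_(i < n) u i s) t.
Proof.
move=> H; elim: n u H => [|n IH] u H.
  under eq_fun => s do rewrite big_ord0; exact: Dc_cst.
under eq_fun => s do rewrite big_ord_recr /=.
by apply: Dc_add => //; apply: IH.
Qed.

Lemma cderiv_sum (R : realType) n (u : 'I_n -> R -> R[i]) t :
  (forall i, Dc (u i) t) ->
  cderiv (fun s => \sum_(i < n) u i s) t = \sum_(i < n) cderiv (u i) t.
Proof.
move=> H; elim: n u H => [|n IH] u H.
  under eq_fun => s do rewrite big_ord0; by rewrite cderiv_cst big_ord0.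
under eq_fun => s do rewrite big_ord_recr /=.
rewrite cderiv_add ?IH ?big_ord_recr //.
by apply: Dc_sum.
Qed.

Lemma smooth_Dc (R : realType) (u : R -> R[i]) t : smoothC u -> Dc u t.
Proof. by move=> [h1 h2]; split; [exact: (h1 0%N t)|exact: (h2 0%N t)]. Qed.

Lemma dvd_modN (N x : nat) : (N%:Z %| (x %% N)%N%:Z - x%:Z)%Z.
Proof. apply/dvdzP; exists (- (x %/ N)%N%:Z); have := divn_eq x N; nia. Qed.
Lemma dvdE (N : nat) (a b : int) : a = b -> (N%:Z %| a)%Z -> (N%:Z %| b)%Z.
Proof. by move=> ->. Qed.
Lemma dvdD' (N : nat) (a b : int) : (N%:Z %| a)%Z -> (N%:Z %| b)%Z -> (N%:Z %| a + b)%Z.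
Proof. by move=> ha hb; rewrite rpredD. Qed.
Lemma dvdN' (N : nat) (a : int) : (N%:Z %| a)%Z -> (N%:Z %| - a)%Z.
Proof. by move=> ha; rewrite rpredN. Qed.

Lemma twisted_mulL (R : realType) (N : nat) (X Y : loop R N) :
  twisted X -> twisted Y -> twisted (mulL X Y).
Proof.
move=> tX tY p i j hne.
case: (boolP (N%:Z %| i%:Z - j%:Z - p)%Z) => // hnd; exfalso; move/eqP: hne; apply.
rewrite /mulL; case: ifP => _; last by rewrite mxE.
rewrite summxE big1 // => w _; rewrite mxE big1 // => k _.
have [hx|hx] := eqVneq (X (lo X + w%:Z) i k) 0; first by rewrite hx mul0r.
have [hy|hy] := eqVneq (Y (p - lo X - w%:Z) k j) 0; first by rewrite hy mulr0.
move: hnd; have := dvdD' (tX _ _ _ hx) (tY _ _ _ hy).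
by rewrite (_ : _ + _ = i%:Z - j%:Z - p) ?[in X in X -> _]/= => [->|]; last lia.
Qed.

Lemma twisted_subL (R : realType) (N : nat) (X Y : loop R N) :
  twisted X -> twisted Y -> twisted (subL X Y).
Proof.
move=> tX tY p i j; rewrite /subL !mxE.
have [hx|hx] := eqVneq (X p i j) 0; first by rewrite hx sub0r oppr_eq0; apply: tY.
by move=> _; apply: tX.
Qed.

Lemma twisted_addL (R : realType) (N : nat) (X Y : loop R N) :
  twisted X -> twisted Y -> twisted (addL X Y).
Proof.
move=> tX tY p i j; rewrite /addL !mxE.
have [hx|hx] := eqVneq (X p i j) 0; first by rewrite hx add0r; apply: tY.
by move=> _; apply: tX.
Qed.

Lemma twisted_scaleL (R : realType) (N : nat) c (X : loop R N) :
  twisted X -> twisted (scaleL c X).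
Proof.
move=> tX p i j; rewrite /scaleL mxE.
have [hx|hx] := eqVneq (X p i j) 0; first by rewrite hx mulr0 eqxx.
by move=> _; apply: tX.
Qed.

Lemma twisted_pim (R : realType) (N : nat) (X : loop R N) :
  twisted X -> twisted (pim X).
Proof.
move=> tX p i j; rewrite /pim; case: ifP => _; first exact: tX.
by rewrite mxE eqxx.
Qed.

Lemma twisted_oneL (R : realType) (N : nat) : twisted (oneL R N).
Proof.
move=> p i j; rewrite /oneL; case: (p =P 0) => [->|_]; last by rewrite mxE eqxx.
rewrite mxE; case: (i =P j) => [->|]; last by rewrite eqxx.
by move=> _; rewrite subrr subr0 dvdz0.
Qed.

Lemma twisted_shift (R : realType) (N : nat) (i j : 'I_N) :
  shiftM R N i j != 0 -> (N%:Z %| i%:Z - j%:Z - 1)%Z.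
Proof.
rewrite mxE; case: ((i : nat) =P (j.+1 %% N)%N) => [e _|]; last by rewrite eqxx.
by apply: (dvdE _ (dvd_modN N j.+1)); rewrite e; lia.
Qed.

Lemma twisted_calE (R : realType) (N : nat) : twisted (calE R N).
Proof.
move=> p i j; rewrite /calE; case: (p =P 1) => [->|_]; last by rewrite mxE eqxx.
exact: twisted_shift.
Qed.

Lemma twisted_Tcurve (R : realType) (N m : nat) b a t :
  twisted (Tcurve m b a t : loop R N).
Proof.
move=> p i j; rewrite /Tcurve; case: (p =P 1) => [->|_]; first exact: twisted_shift.
case: (p =P 0) => [->|_].
  rewrite mxE; case: (i =P j) => [->|]; last by rewrite eqxx.
  by move=> _; rewrite subrr subr0 dvdz0.
case: ifP => [/andP[h1 h2]|_]; last by rewrite mxE eqxx.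
rewrite mxE; case: ((j : nat) =P ((i + absz p) %% N)%N) => [e _|]; last by rewrite eqxx.
apply: (dvdE _ (dvdN' (dvd_modN N (i + absz p)%N))); rewrite -e; lia.
Qed.

Lemma Fm_out (R : realType) (N : nat) (alpha : R) s :
  s != 0 -> s != 1 -> Fminus N alpha s = 0.
Proof.
move=> h0 h1; rewrite /Fminus /addL /scaleL /oneL /calE.
by rewrite (negbTE h0) (negbTE h1) scaler0 addr0.
Qed.

Lemma Fm0 (R : realType) (N : nat) (alpha : R) : Fminus N alpha 0 = 1%:M.
Proof. by rewrite /Fminus /addL /scaleL /oneL /calE /= scaler0 addr0. Qed.

Lemma Fm1 (R : realType) (N : nat) (alpha : R) :
  Fminus N alpha 1 = (alpha%:C)%C *: shiftM R N.
Proof. by rewrite /Fminus /addL /scaleL /oneL /calE /= add0r. Qed.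

Lemma inG_Fm (R : realType) (N : nat) (alpha : R) : inG (Fminus N alpha).
Proof.
split; first by apply: twisted_addL; [exact: twisted_oneL | apply: twisted_scaleL; exact: twisted_calE].
by exists 0 => s hs; apply: Fm_out; apply/eqP; lia.
Qed.

Lemma L_out (R : realType) (N m : nat) (alpha : R) b a s q :
  (q < - m%:Z) || (1 <= q) ->
  subL (Fminus N alpha) (scaleL (alpha%:C)%C (Tcurve m b a s)) q = 0.
Proof.
move=> hq; rewrite /subL /scaleL.
have [->|h1] := eqVneq q 1.
  by rewrite Fm1 /Tcurve eqxx subrr.
have h0 : q != 0 by apply/eqP; move: hq; lia.
rewrite Fm_out // /Tcurve (negbTE h1) (negbTE h0).
have -> : ((- m%:Z <= q) && (q < 0)) = false by apply/negbTE; move: hq h0; lia.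
by rewrite scaler0 subrr.
Qed.

Lemma Dc_ifm (R : realType) (N : nat) (c : bool) (M1 M2 : R -> 'M[R[i]]_N) i j t :
  Dc (fun s => M1 s i j) t -> Dc (fun s => M2 s i j) t ->
  Dc (fun s => (if c then M1 s else M2 s) i j) t.
Proof. by case: c. Qed.

Lemma Dc_ifm' (R : realType) (N : nat) (c : bool) (M1 M2 : R -> 'M[R[i]]_N) i j t :
  (c -> Dc (fun s => M1 s i j) t) -> (~~ c -> Dc (fun s => M2 s i j) t) ->
  Dc (fun s => (if c then M1 s else M2 s) i j) t.
Proof. by case: c => h1 h2; [apply: h1|apply: h2]. Qed.

Lemma Dc_if (R : realType) (c : bool) (u v : R -> R[i]) t :
  Dc u t -> Dc v t -> Dc (fun s => if c then u s else v s) t.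
Proof. by case: c. Qed.

Lemma Dc_T (R : realType) (N m : nat) b a t q (i j : 'I_N) :
  (forall k, smoothC (b k)) -> (forall j k, (1 <= j <= m)%N -> smoothC (a j k)) ->
  Dc (fun s => (Tcurve m b a s q : 'M[R[i]]_N) i j) t.
Proof.
move=> hb ha; rewrite /Tcurve.
apply: Dc_ifm; first exact: Dc_cst.
apply: Dc_ifm.
  under eq_fun => s do rewrite mxE.
  by apply: Dc_if; [apply: smooth_Dc | apply: Dc_cst].
apply: Dc_ifm' => hr.
  under eq_fun => s do rewrite mxE.
  apply: Dc_if; [apply: smooth_Dc; apply: ha | apply: Dc_cst].
  by move: hr; lia.
by under eq_fun => s do rewrite mxE; apply: Dc_cst.
Qed.

Lemma Dc_L (R : realType) (N m : nat) (alpha : R) b a t q (i j : 'I_N) :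
  (forall k, smoothC (b k)) -> (forall j k, (1 <= j <= m)%N -> smoothC (a j k)) ->
  Dc (fun s => subL (Fminus N alpha) (scaleL (alpha%:C)%C (Tcurve m b a s)) q i j) t.
Proof.
move=> hb ha; rewrite /subL /scaleL.
under eq_fun => s do rewrite !mxE -mulN1r mulrA.
apply: Dc_add; first exact: Dc_cst.
by apply: Dc_mull; apply: Dc_T.
Qed.

Lemma L0_entry (R : realType) (N m : nat) (alpha : R) b a s (i j : 'I_N) :
  subL (Fminus N alpha) (scaleL (alpha%:C)%C (Tcurve m b a s)) 0 i j =
  if i == j then 1 - (alpha%:C)%C * b i s else 0.
Proof.
rewrite /subL /scaleL Fm0 /Tcurve /= !mxE.
by case: (i =P j) => _; rewrite ?mulr0 ?subr0.
Qed.

Lemma cderiv_mulr (R : realType) (c : R[i]) (u : R -> R[i]) t :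
  Dc u t -> cderiv (fun s => u s * c) t = cderiv u t * c.
Proof.
move=> h.
have -> : (fun s => u s * c) = (fun s => c * u s) by apply/funext => s; rewrite mulrC.
rewrite cderiv_mull; [exact: mulrC | exact: h].
Qed.

Lemma Dc_mulr (R : realType) (c : R[i]) (u : R -> R[i]) t :
  Dc u t -> Dc (fun s => u s * c) t.
Proof.
move=> h.
have -> : (fun s => u s * c) = (fun s => c * u s) by apply/funext => s; rewrite mulrC.
exact: Dc_mull.
Qed.

Lemma cderiv_lin (R : realType) (c d : R[i]) (u : R -> R[i]) t :
  Dc u t -> cderiv (fun s => c - d * u s) t = - d * cderiv u t.
Proof.
move=> h.
have -> : (fun s => c - d * u s) = (fun s => (fun _ => c) s + (fun s => (- d) * u s) s).
  by apply/funext => s; rewrite mulNr.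
rewrite cderiv_add; [|exact: Dc_cst|exact: Dc_mull].
rewrite cderiv_cst add0r cderiv_mull; [by []|exact: h].
Qed.

Lemma shift_modinj (N : nat) (j k : 'I_N) : (j.+1 %% N == k.+1 %% N)%N = (j == k).
Proof.
apply/idP/idP => [h|/eqP->]; last by rewrite eqxx.
apply/eqP/val_inj => /=; move: h.
rewrite -(addn1 j) -(addn1 k) eqn_modDr.
rewrite (modn_small (ltn_ord j)) (modn_small (ltn_ord k)).
by move/eqP.
Qed.

Lemma sumYS (R : realType) (N : nat) (Z : 'M[R[i]]_N) (k k' : 'I_N) :
  (k' : nat) = (k.+1 %% N)%N -> (Z *m shiftM R N) k k = (shiftM R N *m Z) k' k'.
Proof.
move=> hk; rewrite /shiftM !mxE (bigD1 k') //= [RHS](bigD1 k) //=.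
rewrite !mxE hk !eqxx mulr1 mul1r.
rewrite [X in _ + X]big1 ?addr0 => [|j hj]; last first.
  rewrite !mxE; case: ((j : nat) =P (k.+1 %% N)%N) => [e|_]; last by rewrite mulr0.
  by move: hj; rewrite -val_eqE /= hk e eqxx.
rewrite [X in _ = _ + X]big1 ?addr0 => [|j hj]; first by [].
by rewrite !mxE hk eq_sym shift_modinj (negbTE hj) mul0r.
Qed.

Lemma sum_step (R : realType) (N : nat) (d : 'I_N -> R[i]) n (hn : (n < N)%N) :
  \sum_(j < N | (j < n.+1)%N) d j = \sum_(j < N | (j < n)%N) d j + d (Ordinal hn).
Proof.
rewrite (bigD1 (Ordinal hn)) //= addrC; congr (_ + _); apply: eq_bigl => j.
by rewrite ltnS ltn_neqAle -val_eqE /= andbC.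
Qed.

Lemma mulL_at0 (R : realType) (N : nat) (X Y : loop R N) :
  bounded_below X -> bounded_below Y ->
  (forall s, 1 <= s -> X s = 0) -> (forall s, 1 <= s -> Y s = 0) ->
  mulL X Y 0 = X 0 *m Y 0.
Proof.
move=> bX bY hX hY.
rewrite (@mulL_win _ _ X Y 0 0 1 bX bY); last first.
  move=> s /orP[hs|hs]; first by rewrite hY ?mulmx0 //; lia.
  by rewrite hX ?mul0mx.
rewrite big_ord1; f_equal; f_equal; lia.
Qed.

Lemma bb_pim (R : realType) (N : nat) (X : loop R N) :
  bounded_below X -> bounded_below (pim X).
Proof. by move=> [c hc]; exists c => p hp; rewrite /pim hc ?if_same. Qed.

Unset Implicit Arguments. Set Strict Implicit.

Theorem mainTheorem12 (R : realType) (N m : nat) (alpha : R)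
  (f : loop R N -> loop R N)
  (b : 'I_N -> R -> R[i]) (a : nat -> 'I_N -> R -> R[i])
  (Finv : loop R N) :
  (2 <= N)%N -> (1 <= m)%N -> alpha != 0 ->
  (* f : \hat g -> \hat g, Ad-covariant *)
  (forall X, inG X -> inG (f X)) ->
  (forall g gi X, inG g -> inG gi ->
     mulL g gi = oneL R N -> mulL gi g = oneL R N -> inG X ->
     f (mulL (mulL g X) gi) = mulL (mulL g (f X)) gi) ->
  (* T(t) in T_{m+1} is a smooth curve *)
  (forall k, smoothC (b k)) ->
  (forall j k, (1 <= j <= m)%N -> smoothC (a j k)) ->
  (forall k t, 1 - (alpha%:C)%C * b k t != 0) ->
  (* Finv = F_-^{-1} in the completed algebra *)
  inG Finv -> mulL (Fminus N alpha) Finv = oneL R N ->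
  mulL Finv (Fminus N alpha) = oneL R N ->
  let L := fun t => subL (Fminus N alpha)
                         (scaleL (alpha%:C)%C (Tcurve m b a t)) in
  let T1 := fun t => mulL (L t) Finv in
  let T2 := fun t => mulL Finv (L t) in
  let A1 := fun t => mulL (Fminus N alpha) (pim (mulL Finv (f (T1 t)))) in
  let A2 := fun t => mulL (pim (mulL (f (T2 t)) Finv)) (Fminus N alpha) in
  (forall t, dotL T1 t = commL (A1 t) (T1 t)) ->
  forall t : R,
    (forall k k' : 'I_N, (k' : nat) = (k.+1 %% N)%N ->
        P0 (A2 t) k k = P0 (A1 t) k' k') /\
    exists C : R[i], forall k : 'I_N,
      P0 (A1 t) k k = C + \sum_(j < N | (j < k)%N)
          (alpha%:C)%C * cderiv (b j) t / (1 - (alpha%:C)%C * b j t) /\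
      P0 (A2 t) k k = C + \sum_(j < N | (j <= k)%N)
          (alpha%:C)%C * cderiv (b j) t / (1 - (alpha%:C)%C * b j t).
Proof.
move=> hN hm hal fG fcov hb ha hnz iP hFP hPF L T1 T2 A1 A2 hdyn t.
set F := Fminus N alpha.
have iF : inG F by apply: inG_Fm.
have bF := iF.2; have bP := iP.2; have tP := iP.1.
have hFo : forall s, s != 0 -> s != 1 -> F s = 0 by move=> s; apply: Fm_out.
have Lout : forall s q, (q < - m%:Z) || (1 <= q) -> L s q = 0.
  by move=> s q hq; apply: L_out.
have bL : forall s, bounded_below (L s).
  by move=> s; exists (- m%:Z) => q hq; apply: Lout; rewrite hq.
have tL : forall s, twisted (L s).
  move=> s; apply: twisted_subL; first exact: iF.1.
  by apply: twisted_scaleL; apply: twisted_Tcurve.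
have bT1 : forall s, bounded_below (T1 s) by move=> s; apply: bb_mulL.
have iT1 : inG (T1 t) by split; [apply: twisted_mulL|].
have ifT1 := fG _ iT1; have bfT1 := ifT1.2.
set Y := pim (mulL Finv (f (T1 t))).
have bY : bounded_below Y by apply: bb_pim; apply: bb_mulL.
have K1 : mulL (mulL Finv (T1 t)) F = T2 t.
  rewrite /T1 /T2 (mulLA bP (bT1 t) bF) (mulLA (bL t) bP bF) hPF.
  by rewrite (mulL1 (bL t)).
have K2 : f (T2 t) = mulL (mulL Finv (f (T1 t))) F by rewrite -K1; apply: fcov.
have K3 : mulL (f (T2 t)) Finv = mulL Finv (f (T1 t)).
  by rewrite K2 (mulLA (bb_mulL bP bfT1) bF bP) hFP mulL1 //; apply: bb_mulL.
have eA2 : A2 t = mulL Y F by rewrite /A2 /= K3.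
have eA1 : A1 t = mulL F Y by [].
have Yn : forall s, 0 <= s -> Y s = 0.
  by move=> s hs; rewrite /Y /pim ltNge hs.
have P1 : P0 (A1 t) = (alpha%:C)%C *: (shiftM R N *m Y (-1)).
  rewrite /P0 eA1 (@mulL2l R N F Y 0 bY hFo) /F Fm0 Fm1 Yn // mulmx0 add0r -scalemxAl sub0r.
  by [].
have P2 : P0 (A2 t) = (alpha%:C)%C *: (Y (-1) *m shiftM R N).
  rewrite /P0 eA2 (@mulL2r R N F Y 0 bY hFo) /F Fm0 Fm1 Yn // mul0mx add0r -scalemxAr sub0r.
  by [].
have part1 : forall k k' : 'I_N, (k' : nat) = (k.+1 %% N)%N ->
        P0 (A2 t) k k = P0 (A1 t) k' k'.
  by move=> k k' hk; rewrite P1 P2 [LHS]mxE [RHS]mxE (sumYS _ hk).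
split; first exact: part1.
have Dl : forall q i j, Dc (fun s => L s q i j) t.
  by move=> q i j; apply: Dc_L.
have dLout : forall q, (q < - m%:Z) || (1 <= q) -> dotL L t q = 0.
  move=> q hq; apply/matrixP => i j; rewrite /dotL !mxE.
  have -> : (fun s => L s q i j) = (fun _ => 0).
    by apply/funext => s; rewrite Lout // mxE.
  exact: cderiv_cst.
have bdL : bounded_below (dotL L t).
  by exists (- m%:Z) => q hq; apply: dLout; rewrite hq.
have hw : forall p (X : loop R N), (forall q, (q < - m%:Z) || (1 <= q) -> X q = 0) ->
    bounded_below X ->
    mulL X Finv p = \sum_(w < m.+1) X (- m%:Z + w%:Z) *m Finv (p - (- m%:Z + w%:Z)).
  move=> p X hX bX; apply: mulL_win => // s hs; rewrite hX ?mul0mx //; lia.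
have D1 : dotL T1 t = mulL (dotL L t) Finv.
  apply/funext => p; apply/matrixP => i j.
  transitivity (cderiv (fun s => T1 s p i j) t); first by rewrite /dotL mxE.
  have -> : (fun s => T1 s p i j) = (fun s => \sum_(w < m.+1) \sum_(k < N)
         L s (- m%:Z + w%:Z) i k * Finv (p - (- m%:Z + w%:Z)) k j).
    apply/funext => s; rewrite /T1 (hw p _ (Lout s) (bL s)) summxE.
    by apply: eq_bigr => w _; rewrite mxE.
  rewrite (hw p _ dLout bdL) summxE cderiv_sum => [|w]; last first.
    by apply: Dc_sum => k; apply: Dc_mulr.
  apply: eq_bigr => w _; rewrite mxE cderiv_sum => [|k]; last by apply: Dc_mulr.
  by apply: eq_bigr => k _; rewrite cderiv_mulr // /dotL mxE.
have E1 : mulL (dotL T1 t) F = dotL L t.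
  by rewrite D1 (mulLA bdL bP bF) hPF mulL1.
have bA1 : bounded_below (A1 t) by rewrite eA1; apply: bb_mulL.
have bA2 : bounded_below (A2 t) by rewrite eA2; apply: bb_mulL.
have A1pos : forall s, 1 <= s -> A1 t s = 0.
  move=> s hs; rewrite eA1 (@mulL2l R N F Y s bY hFo) !Yn ?mulmx0 ?addr0 //; lia.
have A2pos : forall s, 1 <= s -> A2 t s = 0.
  move=> s hs; rewrite eA2 (@mulL2r R N F Y s bY hFo) !Yn ?mul0mx ?addr0 //; lia.
have Lpos : forall s, 1 <= s -> L t s = 0.
  by move=> s hs; apply: Lout; rewrite hs orbT.
have eT1F : mulL (T1 t) F = L t.
  by rewrite /T1 (mulLA (bL t) bP bF) hPF mulL1.
have E0 : mulL (dotL T1 t) F = subL (mulL (A1 t) (L t)) (mulL (L t) (A2 t)).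
  rewrite hdyn /commL (mulLBl (bb_mulL bA1 (bT1 t)) (bb_mulL (bT1 t) bA1) bF).
  rewrite (mulLA bA1 (bT1 t) bF) (mulLA (bT1 t) bA1 bF) eT1F.
  rewrite eA1 (mulLA bF bY bF) -(mulLA (bT1 t) bF (bb_mulL bY bF)) eT1F -eA2.
  by [].
have eL0 : forall s (i j : 'I_N), L s 0 i j = if i == j then 1 - (alpha%:C)%C * b i s else 0.
  by move=> s i j; exact: L0_entry.
have R2 : forall k, P0 (A2 t) k k = P0 (A1 t) k k +
     (alpha%:C)%C * cderiv (b k) t / (1 - (alpha%:C)%C * b k t).
  move=> k.
  have := congr1 (fun X : loop R N => X 0 k k) E0; rewrite /= E1 /subL mxE.
  rewrite (mulL_at0 bA1 (bL t) A1pos Lpos) (mulL_at0 (bL t) bA2 Lpos A2pos).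
  rewrite !mxE (bigD1 k) //= [X in _ = _ - X](bigD1 k) //=.
  rewrite big1 ?addr0 => [|j hj]; last by rewrite eL0 (negbTE hj) mulr0.
  rewrite [X in _ = _ - (_ + X)]big1 ?addr0 => [|j hj]; last first.
    by rewrite eL0 eq_sym (negbTE hj) mul0r.
  rewrite !eL0 eqxx.
  have -> : (fun s => L s 0 k k) = (fun s => 1 - (alpha%:C)%C * b k s).
    by apply/funext => s; rewrite eL0 eqxx.
  rewrite cderiv_lin; last exact: smooth_Dc.
  rewrite /P0; move: (A1 t 0 k k) (A2 t 0 k k) (cderiv (b k) t) (hnz k t) => x y z hu e.
  have h2 : (alpha%:C)%C * z = (y - x) * (1 - (alpha%:C)%C * b k t).
    transitivity (- (- (alpha%:C)%C * z)); first by ring.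
    by rewrite e; ring.
  by rewrite h2 mulfK //; ring.
have hN0 : (0 < N)%N by apply: leq_trans hN.
have R1 : forall n (hn : (n.+1 < N)%N),
    P0 (A1 t) (Ordinal hn) (Ordinal hn) =
    P0 (A2 t) (Ordinal (ltnW hn)) (Ordinal (ltnW hn)).
  by move=> n hn; symmetry; apply: part1 => /=; rewrite modn_small.
pose C := P0 (A1 t) (Ordinal hN0) (Ordinal hN0).
have Hind : forall n (hn : (n < N)%N), P0 (A1 t) (Ordinal hn) (Ordinal hn) =
    C + \sum_(j < N | (j < n)%N)
          (alpha%:C)%C * cderiv (b j) t / (1 - (alpha%:C)%C * b j t).
  elim=> [|n IH] hn.
    rewrite big1 ?addr0 //.
    by rewrite /C; congr (P0 (A1 t) _ _); apply/val_inj.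
  rewrite R1 R2 (IH (ltnW hn)).
  rewrite (sum_step (fun j => (alpha%:C)%C * cderiv (b j) t / (1 - (alpha%:C)%C * b j t)) (ltnW hn)).
  by rewrite addrA.
exists C => k; case: k => k hk; split; first exact: Hind.
rewrite R2 Hind -addrA.
under eq_bigl => j do rewrite -ltnS.
by rewrite (sum_step (fun j => (alpha%:C)%C * cderiv (b j) t / (1 - (alpha%:C)%C * b j t)) hk).
Qed.
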